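(* For any causal order $\Omega$ on a finite set $E$ and any family $\underline{I}=(I_\omega)_{\omega\in E}$ of non-empty finite sets, $\mathrm{Hist}(\Omega,\underline I)$ is a $\vee$-prime subset of the set of partial functions on $\underline I$.
   Context: A causal order $\Omega$ on $E$ is a preorder $\le_\Omega$; $\downarrow\omega=\{\xi:\xi\le_\Omega\omega\}$. Partial functions on $\underline I$: functions $f$ with $\mathrm{dom}(f)\subseteq E$ and $f(\omega)\in I_\omega$. $\mathrm{Hist}(\Omega,\underline I)=\bigcup_{\xi\in E}\prod_{\omega\in\downarrow\xi}I_\omega$. Two partial functions are compatible if they agree on the intersection of their domains; a compatible set $\mathcal F$ has join $\bigvee\mathcal F$, the partial function on $\bigcup_{f\in\mathcal F}\mathrm{dom}(f)$ extending every member. A set $\Theta$ of partial functions is $\vee$-prime if for every compatible $\mathcal F\subseteq\Theta$ with $\bigvee\mathcal F\in\Theta$ we have $\bigvee\mathcal F\in\mathcal F$. *)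

(* Defs.v *)
From mathcomp Require Import all_boot.
Set Implicit Arguments. Unset Strict Implicit. Unset Printing Implicit Defensive.

Definition causal_order (E : finType) (le : rel E) : Prop :=
  reflexive le /\ transitive le.

(* Partial functions on the family I: f w = Some x means w \in dom f and f w = x. *)
Definition pfun (E : finType) (I : E -> finType) := forall w : E, option (I w).

Definition dom (E : finType) (I : E -> finType) (f : pfun I) (w : E) : Prop :=
  f w <> None.

Definition downset (E : finType) (le : rel E) (xi : E) : pred E :=
  [pred w | le w xi].

(* Hist(Omega, I) = union over xi of the products over the downset of xi,
   viewed as partial functions with domain exactly the downset of xi. *)
Definition Hist (E : finType) (le : rel E) (I : E -> finType) (f : pfun I) : Prop :=
  exists xi : E, forall w : E, dom f w <-> w \in downset le xi.

Definition compatible (E : finType) (I : E -> finType) (f g : pfun I) : Prop :=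
  forall w : E, dom f w -> dom g w -> f w = g w.

Definition compatible_set (E : finType) (I : E -> finType) (F : pfun I -> Prop) : Prop :=
  forall f g, F f -> F g -> compatible f g.

Definition is_join (E : finType) (I : E -> finType) (F : pfun I -> Prop) (g : pfun I) : Prop :=
  (forall w, dom g w <-> exists2 f, F f & dom f w) /\
  (forall f, F f -> forall w, dom f w -> g w = f w).

Definition join_prime (E : finType) (I : E -> finType) (Theta : pfun I -> Prop) : Prop :=
  forall (F : pfun I -> Prop) (g : pfun I),
    (forall f, F f -> Theta f) -> compatible_set F -> is_join F g -> Theta g -> F g.

(* Main.v *)
Require Import Defs.
From mathcomp Require Import all_boot.
From Stdlib Require Import FunctionalExtensionality.

Theorem proposition3 (E : finType) (le : rel E) (I : E -> finType) :
  causal_order le ->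
  (forall w : E, 0 < #|I w|) ->
  join_prime (Hist le (I := I)).
Proof.
move=> [Hr Ht] _ F g HF _ [Hdom Hext] [xi Hxi].
have : dom g xi by apply/Hxi; rewrite inE Hr.
case/Hdom=> f Ff dfxi.
have [xi' Hf] := HF f Ff.
have le1 : le xi xi' by have := (proj1 (Hf xi) dfxi); rewrite inE.
have le2 : le xi' xi.
  have : dom g xi'.
    by apply/Hdom; exists f => //; apply/Hf; rewrite inE Hr.
  by move/Hxi; rewrite inE.
have eqd : forall w, dom f w <-> dom g w.
  move=> w; split => H.
  - by apply/Hxi; move/Hf: H; rewrite !inE => H; exact: Ht H le2.
  - by apply/Hf; move/Hxi: H; rewrite !inE => H; exact: Ht H le1.
have -> : g = f.
  apply: functional_extensionality_dep => w.
  case: (f w =P None) => [fN|fS].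
  - case: (g w =P None) => [-> //|gS].
    by have := proj2 (eqd w) gS.
  - exact: Hext Ff w fS.
exact: Ff.
Qed.
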